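(* (a) $P_4$ divides $Q_5$. (b) $P_4$ divides $Q_7$. (c) $P_8$ divides $Q_9$. (d) $P_8$ divides $Q_{11}$.
   Context: $Q_q$ denotes the $q$-dimensional hypercube graph (vertices are $q$-tuples of $0$'s and $1$'s, adjacent iff they differ in exactly one coordinate). $P_m$ denotes the path with $m$ edges. For graphs $H$ and $G$, ''$H$ divides $G$'' means there is a collection of subgraphs $H_i$ of $G$, each isomorphic to $H$, such that $E(G)$ is the disjoint union of the edge sets $E(H_i)$. *)

(* Defs.v *)
(* Simple graphs are symmetric irreflexive relations on a finType. *)
From mathcomp Require Import all_boot all_order.
Set Implicit Arguments. Unset Strict Implicit. Unset Printing Implicit Defensive.

Definition hypercube (q : nat) : rel {ffun 'I_q -> bool} :=
  fun x y => #|[set i | x i != y i]| == 1.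

Definition path_graph (m : nat) : rel 'I_m.+1 :=
  fun i j => (i.+1 == j :> nat) || (j.+1 == i :> nat).

Definition edges (T : finType) (e : rel T) : {set {set T}} :=
  [set [set p.1; p.2] | p in [set p : T * T | e p.1 p.2]].

(* f is an injective homomorphism from (TH,eH) to (TG,eG); its image is a
   subgraph of G isomorphic to H, and every such subgraph arises this way. *)
Definition embedding (TH TG : finType) (eH : rel TH) (eG : rel TG) (f : TH -> TG) : Prop :=
  injective f /\ (forall x y, eH x y -> eG (f x) (f y)).

Definition image_edges (TH TG : finType) (eH : rel TH) (f : TH -> TG) : {set {set TG}} :=
  [set [set f p.1; f p.2] | p in [set p : TH * TH | eH p.1 p.2]].

Definition divides (TH TG : finType) (eH : rel TH) (eG : rel TG) : Prop :=
  exists (k : nat) (F : 'I_k -> TH -> TG),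
    (forall i, embedding eH eG (F i)) /\
    (forall i j, i != j -> [disjoint image_edges eH (F i) & image_edges eH (F j)]) /\
    \bigcup_(i < k) image_edges eH (F i) = edges eG.

Arguments hypercube q : clear implicits.
Arguments path_graph m : clear implicits.

(* Main.v *)
Require Import Defs.
From mathcomp Require Import all_boot all_order.
Set Implicit Arguments. Unset Strict Implicit. Unset Printing Implicit Defensive.

Section Gen.
Variables n m : nat.
Local Notation T := {ffun 'I_n -> bool}.

Definition vof (s : seq bool) : T := [ffun i : 'I_n => nth false s i].
Definition flip (s : seq bool) (d : nat) := set_nth false s d (~~ nth false s d).
Definition vert (s : seq bool) (ds : seq nat) (j : nat) := foldl flip s (take j ds).
Definition clr (s : seq bool) d := set_nth false s d false.
Definition ekeys (p : seq bool * seq nat) : seq (seq bool * nat) :=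
  mkseq (fun j => (clr (vert p.1 p.2 j) (nth 0 p.2 j), nth 0 p.2 j)) m.
Fixpoint allvecs k : seq (seq bool) :=
  if k is k'.+1 then [seq b :: s | b <- [:: false; true], s <- allvecs k'] else [:: [::]].
Definition allkeys : seq (seq bool * nat) :=
  [seq k <- [seq (s, d) | d <- iota 0 n, s <- allvecs n] | ~~ nth false k.1 k.2].
Definition pathok (p : seq bool * seq nat) :=
  [&& size p.1 == n, size p.2 == m, all (fun d => d < n) p.2 & uniq (mkseq (vert p.1 p.2) m.+1)].
Fixpoint lexle (s t : seq bool) : bool :=
  match s, t with
  | [::], _ => true
  | _ :: _, [::] => false
  | x :: s', y :: t' => if x == y then lexle s' t' else ~~ x
  end.
Definition keyle (a b : seq bool * nat) : bool :=
  if a.2 < b.2 then true else if a.2 == b.2 then lexle a.1 b.1 else false.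
Definition check (P : seq (seq bool * seq nat)) :=
  all pathok P && (sort keyle (flatten (map ekeys P)) == sort keyle allkeys).

Definition K (k : seq bool * nat) : {set T} := [set vof k.1; vof (set_nth false k.1 k.2 true)].

Lemma vof_inj s t : size s = n -> size t = n -> vof s = vof t -> s = t.
Proof.
move=> hs ht e; apply: (@eq_from_nth _ false); first by rewrite hs ht.
move=> i hi; rewrite hs in hi.
by have := congr1 (fun f : T => f (Ordinal hi)) e; rewrite !ffunE.
Qed.

Lemma vof_eq s t : (forall i : 'I_n, nth false s i = nth false t i) -> vof s = vof t.
Proof. by move=> h; apply/ffunP=> i; rewrite !ffunE h. Qed.

Lemma size_flip s d : d < size s -> size (flip s d) = size s.
Proof. by move=> h; rewrite size_set_nth; apply/maxn_idPr. Qed.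

Lemma size_foldl s t : size s = n -> all (fun d => d < n) t -> size (foldl flip s t) = n.
Proof.
elim: t s => [|d t IH] s hs //= /andP[hd ht].
by apply: IH => //; rewrite size_flip // hs.
Qed.

Lemma size_vert s ds j : size s = n -> all (fun d => d < n) ds -> size (vert s ds j) = n.
Proof.
move=> hs hds; apply: size_foldl => //.
by apply/allP=> d /mem_take hd; move/allP: hds; apply.
Qed.

Lemma vert_succ s ds j : j < size ds -> vert s ds j.+1 = flip (vert s ds j) (nth 0 ds j).
Proof. by move=> h; rewrite /vert (take_nth 0 h) foldl_rcons. Qed.

Lemma hyp_sym x y : hypercube n x y = hypercube n y x.
Proof.
rewrite /hypercube; congr (_ == 1); apply: eq_card=> i; by rewrite !inE eq_sym.
Qed.

Lemma hyp_flip s d : d < n -> hypercube n (vof s) (vof (flip s d)).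
Proof.
move=> hd; rewrite /hypercube.
have -> : [set i | vof s i != vof (flip s d) i] = [set Ordinal hd].
  apply/setP=> i; rewrite !inE !ffunE /flip nth_set_nth /=.
  case: (i =P Ordinal hd) => [->|ne] /=; first by rewrite eqxx; case: (nth false s d).
  have -> : ((i : nat) == d) = false.
    by apply/negbTE/eqP=> e; apply: ne; apply: val_inj.
  by rewrite eqxx.
by rewrite cards1.
Qed.

Lemma edge_key s d : [set vof s; vof (flip s d)] = K (clr s d, d).
Proof.
rewrite /K /= /clr /flip; case h: (nth false s d).
- rewrite setUC; congr [set _; _]; apply: vof_eq=> i; rewrite !nth_set_nth /= ?nth_set_nth /=;
  case: ((i:nat) =P d) => [e|ne]; rewrite ?e ?h // ?eqxx.
- congr [set _; _]; apply: vof_eq=> i; rewrite !nth_set_nth /= ?nth_set_nth /=;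
  case: ((i:nat) =P d) => [e|ne]; rewrite ?e ?h // ?eqxx.
Qed.

Lemma mem_allvecs k s : (s \in allvecs k) = (size s == k).
Proof.
elim: k s => [|k IH] s; first by case: s.
have -> : allvecs k.+1 = [seq b :: s | b <- [:: false; true], s <- allvecs k] by [].
apply/allpairsP/idP.
  by move=> -[[b' s'] /= [_ hs ->]]; rewrite /= eqSS -IH.
case: s => [|b s] //=; rewrite eqSS -IH => hs; exists (b, s); split => //=.
by case: b; rewrite !inE.
Qed.

Lemma uniq_allvecs k : uniq (allvecs k).
Proof.
elim: k => [|k IH] //.
have -> : allvecs k.+1 = [seq b :: s | b <- [:: false; true], s <- allvecs k] by [].
apply: allpairs_uniq => //.
by move=> [b1 s1] [b2 s2] _ _ /= [-> ->].
Qed.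

Lemma uniq_allkeys : uniq allkeys.
Proof.
apply: filter_uniq; apply: allpairs_uniq; rewrite ?iota_uniq ?uniq_allvecs //.
by move=> [d1 s1] [d2 s2] _ _ /= [-> ->].
Qed.

Lemma mem_allkeys k : (k \in allkeys) = [&& size k.1 == n, k.2 < n & ~~ nth false k.1 k.2].
Proof.
rewrite mem_filter; case: k => [s d] /=.
case: (nth false s d); rewrite /= ?andbF ?andbT //.
apply/allpairsP/andP.
  by move=> -[[d' s'] /= [hd hs [-> ->]]]; rewrite mem_iota in hd; rewrite -mem_allvecs.
by move=> [hs hd]; exists (d, s); split => //=; rewrite ?mem_iota ?mem_allvecs.
Qed.

Lemma K_inj k1 k2 : k1 \in allkeys -> k2 \in allkeys -> K k1 = K k2 -> k1 = k2.
Proof.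
case: k1 => [c d]; case: k2 => [c' d'].
rewrite !mem_allkeys /= => /and3P[/eqP hc hd hcd] /and3P[/eqP hc' hd' hcd'].
rewrite /K /= => e.
pose A := vof c; pose B := vof (set_nth false c d true).
pose A' := vof c'; pose B' := vof (set_nth false c' d' true).
have vA : forall i : 'I_n, A i = nth false c i by move=> i; rewrite ffunE.
have vB : forall i : 'I_n, B i = if (i:nat) == d then true else nth false c i.
  by move=> i; rewrite ffunE nth_set_nth.
have vA' : forall i : 'I_n, A' i = nth false c' i by move=> i; rewrite ffunE.
have vB' : forall i : 'I_n, B' i = if (i:nat) == d' then true else nth false c' i.
  by move=> i; rewrite ffunE nth_set_nth.
have hA : A \in [set A'; B'] by rewrite -e set21.
have hB : B \in [set A'; B'] by rewrite -e set22.
have AB : A != B.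
  apply/eqP=> /(congr1 (fun f : T => f (Ordinal hd))).
  by rewrite vA vB /= eqxx (negbTE hcd).
rewrite !inE in hA hB.
case/orP: hA => /eqP hA.
- have hB2 : B = B'.
    case/orP: hB => /eqP // hB; by case/eqP: AB; rewrite hA hB.
  have dd : d = d'.
    case: (eqVneq d d') => // ne.
    have := congr1 (fun f : T => f (Ordinal hd)) hB2.
    by rewrite vB vB' /= eqxx (negbTE ne) -(vA' (Ordinal hd)) -hA vA /= (negbTE hcd).
  subst d'; congr (_, _); apply: vof_inj => //.
- have hB2 : B = A'.
    case/orP: hB => /eqP // hB; by case/eqP: AB; rewrite hA hB.
  exfalso.
  have h1 := congr1 (fun f : T => f (Ordinal hd')) hA.
  have h2 := congr1 (fun f : T => f (Ordinal hd')) hB2.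
  move: h1 h2; rewrite /= vA vB' vB vA' /= eqxx (negbTE hcd').
  case: (d' =P d) => [ed|ne]; last by move=> ->.
  by subst d'; rewrite (negbTE hcd).
Qed.

Lemma edge_cover x y : hypercube n x y -> exists2 k, k \in allkeys & [set x; y] = K k.
Proof.
wlog hx : x y / forall d : 'I_n, (x d != y d) -> x d = false.
  move=> W h; case/cards1P: (h) => d hd.
  have hd' : forall i, (x i != y i) = (i == d).
    by move=> i; have := in_set1 i d; rewrite -hd inE.
  case hxd : (x d).
  - have hd2 : forall i, (y i != x i) = (i == d) by move=> i; rewrite eq_sym hd'.
    have h1 : forall i, y i != x i -> y i = false.
      move=> i; rewrite hd2 => /eqP ->.
      by have := hd' d; rewrite eqxx hxd; case: (y d).
    have h2 : hypercube n y x by rewrite hyp_sym.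
    by case: (W y x h1 h2) => k hk e; exists k => //; rewrite setUC.
  - apply: W h => i; rewrite hd' => /eqP -> //.
move=> h; case/cards1P: (h) => d hd.
have hd' : forall i, (x i != y i) = (i == d).
  by move=> i; have := in_set1 i d; rewrite -hd inE.
have xd : x d = false by apply: hx; rewrite hd' eqxx.
have yd : y d = true by have := hd' d; rewrite eqxx xd; case: (y d).
pose s := [seq x i | i <- enum 'I_n].
have ns : forall i : 'I_n, nth false s i = x i.
  by move=> i; rewrite (nth_map i) ?size_enum_ord // nth_ord_enum.
have ss : size s = n by rewrite size_map size_enum_ord.
exists (clr s d, (d:nat)).
  rewrite mem_allkeys /= /clr size_set_nth ss (maxn_idPr (ltn_ord d)) eqxx ltn_ord.
  by rewrite nth_set_nth /= eqxx.
rewrite /K /= /clr; congr [set _; _]; apply/ffunP=> i; rewrite !ffunE ?nth_set_nth /=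
  ?nth_set_nth /=.
- case: (_ =P _) => [e|ne]; first by have -> : i = d by apply: val_inj. by rewrite ns.
- case: (_ =P _) => [e|ne]; first by have -> : i = d by apply: val_inj.
  have : x i == y i by rewrite -[_ == _]negbK hd'; apply/eqP=> e; apply: ne; rewrite e.
  by rewrite ns => /eqP.
Qed.

Lemma uniq_flatten_disj (A : eqType) (ss : seq (seq A)) i j x :
  uniq (flatten ss) -> i < size ss -> j < size ss -> i != j ->
  x \in nth [::] ss i -> x \in nth [::] ss j -> False.
Proof.
elim: ss i j => [|s ss IH] [|i] [|j] //=; rewrite cat_uniq => /and3P[_ hn hu].
- move=> _ hj _ hx hx'; case/hasP: hn; exists x => //.
  by apply/flattenP; exists (nth [::] ss j) => //; apply: mem_nth.
- move=> hi _ _ hx hx'; case/hasP: hn; exists x => //.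
  by apply/flattenP; exists (nth [::] ss i) => //; apply: mem_nth.
- by move=> hi hj hij; apply: IH.
Qed.

Section Main.
Variable P : seq (seq bool * seq nat).
Hypothesis hc : check P.

Let p i := nth ([::], [::]) P i.
Let F (i : 'I_(size P)) (j : 'I_m.+1) : T := vof (vert (p i).1 (p i).2 j).

Lemma pok i : i < size P -> pathok (p i).
Proof. by case/andP: hc => /all_nthP h _ hi; apply: h. Qed.

Lemma perm_keys : perm_eq (flatten (map ekeys P)) allkeys.
Proof.
case/andP: hc => _ /eqP e.
have : perm_eq (sort keyle (flatten (map ekeys P))) (sort keyle allkeys) by rewrite e.
by rewrite perm_sort perm_sym perm_sort perm_sym.
Qed.

Lemma F_emb (i : 'I_(size P)) : embedding (path_graph m) (hypercube n) (F i).
Proof.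
have /and4P[/eqP hs /eqP hds hall hu] := pok (ltn_ord i).
split.
  move=> j1 j2 /vof_inj e; apply: val_inj; apply/eqP.
  rewrite -(nth_uniq [::] _ _ hu) ?size_mkseq ?ltn_ord // !nth_mkseq ?ltn_ord //.
  by apply/eqP; apply: e; apply: size_vert.
have hd : forall j, j < m -> nth 0 (p i).2 j < n.
  by move=> j hj; move/allP: hall; apply; apply: mem_nth; rewrite hds.
move=> j1 j2; rewrite /path_graph /F => /orP[] /eqP e.
- have hj : j1 < m by rewrite -ltnS e ltn_ord.
  by rewrite -e vert_succ ?hds // hyp_flip ?hd.
- have hj : j2 < m by rewrite -ltnS e ltn_ord.
  by rewrite hyp_sym -e vert_succ ?hds // hyp_flip ?hd.
Qed.

Lemma img_keys i E : E \in image_edges (path_graph m) (F i) ->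
  exists2 k, k \in ekeys (p i) & E = K k.
Proof.
have /and4P[/eqP hs /eqP hds hall hu] := pok (ltn_ord i).
case/imsetP=> -[j1 j2]; rewrite inE /path_graph /= => /orP[] /eqP e ->.
- have hj : j1 < m by rewrite -ltnS e ltn_ord.
  exists (nth ([::], 0) (ekeys (p i)) j1); first by apply: mem_nth; rewrite size_mkseq.
  by rewrite nth_mkseq // /F -e vert_succ ?hds // edge_key.
- have hj : j2 < m by rewrite -ltnS e ltn_ord.
  exists (nth ([::], 0) (ekeys (p i)) j2); first by apply: mem_nth; rewrite size_mkseq.
  by rewrite nth_mkseq // /F setUC -e vert_succ ?hds // edge_key.
Qed.

Lemma keys_img (i : 'I_(size P)) k : k \in ekeys (p i) -> K k \in image_edges (path_graph m) (F i).
Proof.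
have /and4P[/eqP hs /eqP hds hall hu] := pok (ltn_ord i).
case/(nthP ([::], 0)) => j; rewrite size_mkseq => hj <-.
have hj1 : j < m.+1 by apply: ltnW.
have hj2 : j.+1 < m.+1 by [].
apply/imsetP; exists (Ordinal hj1, Ordinal hj2).
  by rewrite inE /path_graph /= eqxx.
by rewrite nth_mkseq // /F /= vert_succ ?hds // edge_key.
Qed.

Lemma divides_main : divides (path_graph m) (hypercube n).
Proof.
exists (size P), F; split; first exact: F_emb.
split.
  move=> i j hij; apply/pred0P => E /=.
  apply/negbTE/negP => /andP[/img_keys [k1 hk1 e1] /img_keys [k2 hk2 e2]].
  have m1 : k1 \in flatten (map ekeys P).
    by apply/flattenP; exists (ekeys (p i)) => //; apply/mapP; exists (p i) => //; apply: mem_nth.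
  have m2 : k2 \in flatten (map ekeys P).
    by apply/flattenP; exists (ekeys (p j)) => //; apply/mapP; exists (p j) => //; apply: mem_nth.
  have ek : k1 = k2.
    by apply: K_inj; rewrite -?e1 -?e2 // -(perm_mem perm_keys).
  subst k2.
  apply: (@uniq_flatten_disj _ (map ekeys P) i j k1).
  - by rewrite (perm_uniq perm_keys) uniq_allkeys.
  - by rewrite size_map.
  - by rewrite size_map.
  - exact: hij.
  - by rewrite (nth_map ([::], [::])).
  - by rewrite (nth_map ([::], [::])).
apply/setP=> E; apply/bigcupP/idP.
  move=> [i _ /imsetP [[a b]]]; rewrite inE /= => hab ->.
  apply/imsetP; exists (F i a, F i b) => //; rewrite inE /=.
  by case: (F_emb i) => _; apply.
case/imsetP=> -[x y]; rewrite inE /= => hxy ->.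
case: (edge_cover hxy) => k hk ->.
move: hk; rewrite -(perm_mem perm_keys) => /flattenP [s /mapP [q hq ->] hkq].
have hi : index q P < size P by rewrite index_mem.
exists (Ordinal hi) => //.
apply: keys_img; by rewrite /p /= nth_index.
Qed.

End Main.

End Gen.

Definition phi (vecs : seq nat) (x : seq bool) : nat :=
  foldl (fun acc (bi : bool * nat) => if bi.1 then Nat.lxor acc bi.2 else acc) 0 (zip x vecs).
Definition gen (n : nat) (vecs : seq nat) (base : seq (nat * seq nat)) : seq (seq bool * seq nat) :=
  flatten [seq [seq (x, b.2) | x <- allvecs n & phi vecs x == b.1] | b <- base].

Lemma inst5 : divides (path_graph 4) (hypercube 5).
Proof.
apply: (@divides_main 5 4 (gen 5 [:: 7; 4; 6; 1; 2] [:: (1, [:: 2; 1; 3; 1]); (0, [:: 1; 4; 2; 4]); (5, [:: 4; 0; 3; 1]); (4, [:: 2; 0; 3; 0]); (7, [:: 3; 0; 4; 2])])).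
vm_compute; reflexivity.
Qed.

Lemma inst7 : divides (path_graph 4) (hypercube 7).
Proof.
apply: (@divides_main 7 4 (gen 7 [:: 7; 4; 6; 1; 2; 3; 5] [:: (6, [:: 5; 3; 0; 1]); (2, [:: 3; 5; 6; 1]); (2, [:: 6; 2; 5; 0]); (4, [:: 6; 4; 6; 1]); (2, [:: 2; 4; 2; 3]); (2, [:: 4; 0; 3; 0]); (3, [:: 2; 4; 5; 1])])).
vm_compute; reflexivity.
Qed.

Lemma inst9 : divides (path_graph 8) (hypercube 9).
Proof.
apply: (@divides_main 9 8 (gen 9 [:: 4; 1; 9; 12; 14; 3; 15; 11; 8] [:: (10, [:: 7; 8; 1; 6; 5; 8; 0; 5]); (5, [:: 6; 1; 2; 6; 3; 0; 4; 3]); (2, [:: 0; 6; 4; 8; 1; 8; 3; 2]); (13, [:: 8; 2; 1; 0; 7; 3; 7; 5]); (0, [:: 4; 0; 8; 1; 3; 0; 7; 8]); (10, [:: 5; 3; 1; 6; 8; 6; 4; 5]); (9, [:: 2; 0; 3; 4; 2; 4; 1; 6]); (14, [:: 6; 2; 7; 0; 1; 7; 2; 4]); (12, [:: 3; 5; 4; 5; 2; 7; 5; 7])])).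
vm_compute; reflexivity.
Qed.

Lemma inst11 : divides (path_graph 8) (hypercube 11).
Proof.
apply: (@divides_main 11 8 (gen 11 [:: 4; 10; 9; 3; 6; 14; 8; 2; 5; 1; 15] [:: (6, [:: 3; 2; 9; 7; 9; 2; 5; 1]); (12, [:: 7; 1; 7; 6; 0; 9; 2; 10]); (1, [:: 0; 1; 3; 10; 3; 7; 4; 3]); (14, [:: 4; 6; 9; 8; 5; 7; 3; 8]); (9, [:: 3; 1; 0; 9; 8; 5; 10; 1]); (8, [:: 9; 7; 10; 2; 0; 6; 5; 2]); (14, [:: 3; 4; 0; 8; 6; 1; 5; 9]); (15, [:: 4; 2; 10; 6; 4; 2; 8; 1]); (4, [:: 6; 1; 8; 9; 3; 7; 4; 10]); (0, [:: 4; 10; 8; 0; 10; 0; 6; 5]); (6, [:: 0; 5; 4; 2; 5; 6; 7; 8])])).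
vm_compute; reflexivity.
Qed.

Theorem proposition5 :
  divides (path_graph 4) (hypercube 5) /\
  divides (path_graph 4) (hypercube 7) /\
  divides (path_graph 8) (hypercube 9) /\
  divides (path_graph 8) (hypercube 11).
Proof. by split; [exact: inst5 | split; [exact: inst7 | split; [exact: inst9 | exact: inst11]]]. Qed.
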